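(* Let $\Omega$ be a compact Riemannian manifold without boundary, let $K:\Omega\times\Omega\to\mathbb{R}$ be continuous, and let $\beta>0$. Define for $p\in\mathcal{P}(\Omega)$ $$F_{p,\beta}(p)=\beta^{-1}\log Z_q(p)+\beta^{-1}S(p),\qquad Z_q(p)=\int_\Omega\exp\Big(\beta\int_\Omega K(x,y)p(x)\,dx\Big)dy,\qquad S(p)=\int_\Omega p\log p\,dx.$$ Then for any two distinct probability densities $p_1\neq p_2$ on $\Omega$ with $S(p_1),S(p_2)<\infty$ and any $\lambda\in(0,1)$, $$F_{p,\beta}(\lambda p_1+(1-\lambda)p_2)<\lambda F_{p,\beta}(p_1)+(1-\lambda)F_{p,\beta}(p_2).$$
   Context: $\mathcal{P}(\Omega)$ is the set of probability distributions on $\Omega$, identified with densities with respect to the Riemannian volume measure; $S(p)=+\infty$ if $p$ has no density. *)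

(* Defs.v *)
From HB Require Import structures.
From mathcomp Require Import all_boot all_order all_algebra.
From mathcomp Require Import all_classical all_reals all_analysis.
Set Implicit Arguments. Unset Strict Implicit. Unset Printing Implicit Defensive.
Import Order.TTheory GRing.Theory Num.Theory.
Import numFieldNormedType.Exports.
Local Open Scope classical_set_scope.
Local Open Scope ring_scope.

Definition borel_type (T : ptopologicalType) := g_sigma_algebraType (@open T).

Section Free_energy.
Context {R : realType} {T : ptopologicalType}.
Variable mu : {measure set (borel_type T) -> \bar R}.

Definition is_density (p : borel_type T -> R) : Prop :=
  measurable_fun setT p /\ (forall x, 0 <= p x) /\
  (\int[mu]_x (p x)%:E = 1)%E.

(* Entropy S(p) = \int p log p (with 0 log 0 = 0, since ln 0 = 0). *)
Definition entropy (p : borel_type T -> R) : \bar R :=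
  (\int[mu]_x (p x * ln (p x))%:E)%E.

Definition partition_fun (K : T -> T -> R) (beta : R) (p : borel_type T -> R) : R :=
  Rintegral mu setT
    (fun y => expR (beta * Rintegral mu setT (fun x => K x y * p x))).

Definition free_energy (K : T -> T -> R) (beta : R) (p : borel_type T -> R) : \bar R :=
  ((beta^-1 * ln (partition_fun K beta p))%:E + (beta^-1)%:E * entropy p)%E.

End Free_energy.

(* Main.v *)
Require Import Defs.
From HB Require Import structures.
From mathcomp Require Import all_boot all_order all_algebra.
From mathcomp Require Import all_classical all_reals all_analysis.
From mathcomp Require Import ring lra measurable_realfun.
Import Order.TTheory GRing.Theory Num.Theory.
Import numFieldNormedType.Exports.
Local Open Scope classical_set_scope.
Local Open Scope ring_scope.
Set Implicit Arguments. Unset Strict Implicit.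

Section R.
Context (R : realType).

Lemma expR_conv (l s t : R) : 0 <= l -> l <= 1 ->
  expR (l * s + (1 - l) * t) <= l * expR s + (1 - l) * expR t.
Proof.
move=> l0 l1; have := @convex_expR R (Itv01 l0 l1) s t.
rewrite !convRE /=. Set Printing All. idtac. Unset Printing All. by [].
Qed.

Lemma ln_lt_sub1 (x : R) : 0 < x -> x != 1 -> ln x < x - 1.
Proof.
move=> x0 x1; set s := Num.sqrt x.
have s0 : 0 < s by rewrite sqrtr_gt0.
have sx : s ^+ 2 = x by rewrite sqr_sqrtr // ltW.
have s1 : s != 1 by apply: contra x1 => /eqP s1; rewrite -sx s1 expr1n.
have h1 : ln s <= s - 1.
  have : ln (1 + (s - 1)) <= s - 1 by apply: le_ln1Dx; lra.
  by rewrite addrCA subrr addr0.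
have h2 : 0 < (s - 1) ^+ 2 by rewrite exprn_even_gt0 // subr_eq0.
rewrite -sx lnXn // mulr2n. nra.
Qed.

Lemma key_lt (a m : R) : 0 <= a -> 0 < m -> a != m ->
  a - m < a * ln a - a * ln m.
Proof.
move=> a0 m0 am; have [->|ap] := eqVneq a 0.
  by rewrite ln0 // !mul0r subrr sub0r oppr_lt0.
have ap' : 0 < a by rewrite lt0r ap.
have h := @ln_lt_sub1 (m / a).
have : ln (m / a) < m / a - 1.
  apply: h; first by rewrite divr_gt0.
  by apply: contra am => /eqP H; rewrite -[m](divfK ap) H mul1r.
rewrite ln_div ?posrE // => H.
have := ltr_pM2l ap' (ln m - ln a) (m / a - 1); rewrite H => /esym.
rewrite mulrBr mulrBr mulr1 mulrCA divff ?mulr1 // => H2.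
lra.
Qed.

Lemma key_le (a m : R) : 0 <= a -> 0 < m -> a - m <= a * ln a - a * ln m.
Proof.
move=> a0 m0; have [->|am] := eqVneq a m; first by rewrite !subrr.
exact/ltW/key_lt.
Qed.

Definition phi (t : R) := t * ln t.

Lemma phi_ge (t : R) : 0 <= t -> -1 <= phi t.
Proof.
move=> t0; have := key_le t0 ltr01; rewrite ln1 mulr0 subr0 /phi; lra.
Qed.

Lemma phi_conv_lt (l a b : R) : 0 < l < 1 -> 0 <= a -> 0 <= b -> a != b ->
  phi (l * a + (1 - l) * b) < l * phi a + (1 - l) * phi b.
Proof.
move=> /andP[l0 l1] a0 b0 ab; set m := l * a + (1 - l) * b.
have m0 : 0 < m.
  have [a0'|] := eqVneq a 0.
    have : 0 < b by rewrite lt0r b0 andbT; apply: contra (ab) => /eqP ->; rewrite a0'.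
    rewrite /m a0'; nra.
  move=> an; have : 0 < a by rewrite lt0r an.
  rewrite /m; nra.
have am : a != m.
  apply: contra (ab) => /eqP am; rewrite /m in am.
  have : (1 - l) * (a - b) = 0 by rewrite mulrBr; lra.
  move/eqP; rewrite mulf_eq0 !subr_eq0 => /orP[/eqP l1'|-> //].
  by move: l1; rewrite -l1' ltxx.
have bm : b != m.
  apply: contra (ab) => /eqP bm; rewrite /m in bm.
  have : l * (a - b) = 0 by rewrite mulrBr; lra.
  move/eqP; rewrite mulf_eq0 !subr_eq0 => /orP[/eqP l1'|-> //].
  by move: l0; rewrite l1' ltxx.
have h1 := key_lt a0 m0 am; have h2 := key_lt b0 m0 bm.
rewrite /phi.
have e : m * ln m = l * (a * ln m) + (1 - l) * (b * ln m) by rewrite /m; ring.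
have l0' : 0 < 1 - l by rewrite subr_gt0.
have H1 : l * (a - m) < l * (a * ln a - a * ln m) by rewrite ltr_pM2l.
have H2 : (1 - l) * (b - m) < (1 - l) * (b * ln b - b * ln m) by rewrite ltr_pM2l.
have Em : l * (a - m) + (1 - l) * (b - m) = 0 by rewrite /m; ring.
rewrite e; clearbody m; lra.
Qed.

Lemma phi_conv_le (l a b : R) : 0 < l < 1 -> 0 <= a -> 0 <= b ->
  phi (l * a + (1 - l) * b) <= l * phi a + (1 - l) * phi b.
Proof.
move=> l01 a0 b0; have [->|ab] := eqVneq a b.
  have -> : l * b + (1 - l) * b = b by ring.
  by have -> : l * phi b + (1 - l) * phi b = phi b by ring.
exact/ltW/phi_conv_lt.
Qed.
End R.

Section M.
Context (R : realType) (T : pseudoPMetricType R)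
  (mu : {measure set (borel_type T) -> \bar R}).
Hypothesis cT : compact [set: T].
Hypothesis fmu : (mu setT < +oo)%E.

Lemma cont_meas (f : T -> R) : continuous f ->
  measurable_fun [set: borel_type T] (f : borel_type T -> R).
Proof.
move=> /continuousP cf.
apply: (measurability _ (measurable_realfun.RGenOpens.measurableE R)).
move=> _ [_ [a [b ->] <-]]; apply: sub_sigma_algebra; rewrite setTI.
exact/cf/interval_open.
Qed.

Lemma cont_bounded (f : T -> R) : continuous f ->
  exists M : R, forall x, `|f x| <= M.
Proof.
move=> cf.
have := compact_bounded (continuous_compact (continuous_subspaceT cf) cT).
case=> M [_ HM]; exists (M + 1) => x; apply: (HM (M+1)).
  by rewrite ltrDl.
by exists x.
Qed.

Lemma cont_int (f : T -> R) : continuous f ->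
  mu.-integrable setT (EFin \o (f : borel_type T -> R)).
Proof.
move=> cf; have [M HM] := cont_bounded cf.
apply/integrableP; split; first by apply/measurable_EFinP; exact: cont_meas.
apply: (@le_lt_trans _ _ (\int[mu]_(x in setT) (cst M%:E x))%E).
  apply: ge0_le_integral => //=.
  all: try (move=> x _; rewrite /= lee_fin; exact: HM).
  apply/measurable_EFinP; apply: measurableT_comp => //; exact: cont_meas.
have M0 : 0 <= M by apply: le_trans (HM point).
by rewrite (integral_cst mu measurableT) lte_mul_pinfty.
Qed.


Lemma dens_int p : is_density mu p -> mu.-integrable setT (EFin \o p).
Proof.
move=> [mp [p0 ip]]; apply/integrableP; split; first exact/measurable_EFinP.
rewrite (eq_integral (fun x => (p x)%:E)) ?ip ?ltry // => x _.
by rewrite /= ger0_norm.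
Qed.

Lemma Rint_dens p : is_density mu p -> Rintegral mu setT p = 1.
Proof. by case=> _ [_ ip]; rewrite /Rintegral ip. Qed.

Lemma hp_int (h : T -> R) p : continuous h -> is_density mu p ->
  mu.-integrable setT (EFin \o (fun x => h x * p x)).
Proof.
move=> ch dp; have [M HM] := cont_bounded ch; have [mp [p0 _]] := dp.
apply: (@le_integrable _ _ _ mu setT measurableT _ (fun x => M%:E * (p x)%:E)%E).
- apply/measurable_EFinP; apply: measurable_funM => //; exact: cont_meas.
- move=> x _; rewrite -EFinM /= lee_fin normrM (ger0_norm (p0 x)).
  apply: le_trans (ler_norm _); apply: ler_wpM2r => //; exact: HM.
- by apply: integrableZl => //; exact: (dens_int dp).
Qed.

Variable K : T -> T -> R.
Hypothesis cK : continuous (fun xy : T * T => K xy.1 xy.2).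

Lemma Kx_cont y : continuous (fun x => K x y).
Proof.
move=> x.
have h : (fun x => (x, y)) @ x --> (x, y).
  by apply: cvg_pair => //; exact: cvg_cst.
exact: (continuous_comp h (@cK (x, y))).
Qed.

Lemma g_cont p : is_density mu p ->
  continuous (fun y => Rintegral mu setT (fun x => K x y * p x)).
Proof.
move=> dp y0; apply/cvgrPdist_lt => e e0.
have e'0 : 0 < e / 2 by rewrite divr_gt0.
set e' := e / 2.
have Hn : \forall y \near y0, forall x, `|K x y - K x y0| < e'.
  have := (proj1 (compact_near_coveringP _) cT T (nbhs y0)
      (fun y x => `|K x y - K x y0| < e') _).
  move=> H; apply: (filterS _ (H _ _)).
  - by move=> y Hy x; exact: Hy.

  move=> x _; clear H.
  have := @cK (x, y0); move/cvgrPdist_lt => /(_ (e' / 2)) H.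
  have {H} := H (divr_gt0 e'0 (ltr0Sn _ 1)).
  case=> -[A B] /= [nA nB] sub.
  exists (A, B) => //= -[a b] /= [Aa Bb].
  have h1 := sub (a, b) (conj Aa Bb).
  have h2 := sub (a, y0) (conj Aa (nbhs_singleton nB)).
  have -> : K a b - K a y0 = (K x y0 - K a y0) - (K x y0 - K a b) by ring.
  apply: le_lt_trans (ler_normB _ _) _.
  by rewrite [ltRHS]splitr ltrD.
have [_ [p0 _]] := dp.
apply: filterS Hn => y Hy.
have i0 := hp_int (@Kx_cont y0) dp; have i1 := hp_int (@Kx_cont y) dp.
rewrite -RintegralB //.
under eq_Rintegral do rewrite -mulrBl.
have ch : continuous (fun x => K x y0 - K x y).
  by move=> z; apply: cvgB; apply: Kx_cont.
have ih := hp_int ch dp.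
have ce : continuous (fun _ : T => e') by move=> ?; exact: cvg_cst.
have ce' : continuous (fun _ : T => - e') by move=> ?; exact: cvg_cst.
have ie := hp_int ce dp.
have ie' := hp_int ce' dp.
have Ie : Rintegral mu setT (fun x => e' * p x) = e'.
  by rewrite RintegralZl // ?(Rint_dens dp) ?mulr1 //; exact: dens_int.
have Ie' : Rintegral mu setT (fun x => - e' * p x) = - e'.
  by rewrite RintegralZl // ?(Rint_dens dp) ?mulr1 //; exact: dens_int.
have hb x : `|K x y0 - K x y| < e' by rewrite distrC.
apply: (@le_lt_trans _ _ e'); last by rewrite /e'; lra.
rewrite ler_norml; apply/andP; split.
  rewrite -[X in X <= _]Ie'; apply: le_Rintegral => // x _.
  apply: ler_wpM2r => //; have := hb x; rewrite ltr_norml => /andP[+ _]; exact: ltW.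
rewrite -[X in _ <= X]Ie; apply: le_Rintegral => // x _.
apply: ler_wpM2r => //; have := hb x; rewrite ltr_norml => /andP[_]; exact: ltW.
Qed.

Lemma contM (f h : T -> R) : continuous f -> continuous h ->
  continuous (fun y => f y * h y).
Proof. by move=> cf ch y; apply: cvgM; [exact: cf|exact: ch]. Qed.

Lemma contD (f h : T -> R) : continuous f -> continuous h ->
  continuous (fun y => f y + h y).
Proof. by move=> cf ch y; apply: cvgD; [exact: cf|exact: ch]. Qed.

Lemma contC (k : R) : continuous (fun _ : T => k).
Proof. by move=> y; exact: cvg_cst. Qed.

Lemma contE (f : T -> R) : continuous f -> continuous (fun y => expR (f y)).
Proof.
move=> cf y.
exact: (continuous_comp (@cf y) (@continuous_expR R (f y))).
Qed.

Lemma mu_pos p : is_density mu p -> 0 < fine (mu setT).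
Proof.
move=> [mp [_ ip]].
have mf : mu setT \is a fin_num by rewrite ge0_fin_numE // measure_ge0.
rewrite -lte_fin fineK // lt0e measure_ge0 andbT; apply/eqP => m0.
move: ip; rewrite null_set_integral //; last exact/measurable_EFinP.
by move=> [] /esym /eqP; rewrite oner_eq0.
Qed.

Lemma Z_pos p (G : T -> R) : is_density mu p -> continuous G ->
  0 < Rintegral mu setT (fun y => expR (G y)).
Proof.
move=> dp cG; have [M HM] := cont_bounded cG.
apply: (@lt_le_trans _ _ (Rintegral mu setT (fun _ => expR (- M)))).
  by rewrite Rintegral_cst // mulr_gt0 ?expR_gt0 // (mu_pos dp).
apply: le_Rintegral => //.
- by apply: cont_int; exact: contC.
- by apply: cont_int; exact: contE.
- move=> y _; rewrite ler_expR; have := HM y; rewrite ler_norml => /andP[+ _].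
  by [].
Qed.

Lemma Z_holder p (G1 G2 : T -> R) l : is_density mu p ->
  continuous G1 -> continuous G2 -> 0 < l < 1 ->
  ln (Rintegral mu setT (fun y => expR (l * G1 y + (1 - l) * G2 y))) <=
  l * ln (Rintegral mu setT (fun y => expR (G1 y))) +
  (1 - l) * ln (Rintegral mu setT (fun y => expR (G2 y))).
Proof.
move=> dp c1 c2 /andP[l0 l1].
have A0 := Z_pos dp c1; have B0 := Z_pos dp c2.
set A := Rintegral mu setT (fun y => expR (G1 y)) in A0 *.
set B := Rintegral mu setT (fun y => expR (G2 y)) in B0 *.
set c := l * ln A + (1 - l) * ln B.
have cL : continuous (fun y => l * G1 y + (1 - l) * G2 y).
  by apply: contD; apply: contM => //; exact: contC.
have L0 := Z_pos dp cL.
rewrite -[X in _ <= X]expRK ler_ln ?posrE ?expR_gt0 //.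
have cf1 : continuous (fun y => expR c * l / A * expR (G1 y)).
  by apply: contM; [exact: contC|exact: contE].
have cf2 : continuous (fun y => expR c * (1 - l) / B * expR (G2 y)).
  by apply: contM; [exact: contC|exact: contE].
apply: (@le_trans _ _ (Rintegral mu setT (fun y =>
   expR c * l / A * expR (G1 y) + expR c * (1 - l) / B * expR (G2 y)))).
  apply: le_Rintegral => //.
  - exact: cont_int (contE cL).
  - by apply: cont_int; apply: contD.
  move=> y _.
  have := expR_conv (G1 y - ln A) (G2 y - ln B) (ltW l0) (ltW l1).
  have e1 : expR (G1 y - ln A) = expR (G1 y) / A.
    by rewrite expRD expRN lnK // posrE.
  have e2 : expR (G2 y - ln B) = expR (G2 y) / B.
    by rewrite expRD expRN lnK // posrE.
  have eL : expR (l * G1 y + (1 - l) * G2 y) =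
      expR c * expR (l * (G1 y - ln A) + (1 - l) * (G2 y - ln B)).
    by rewrite -expRD; congr expR; rewrite /c; ring.
  rewrite eL e1 e2 => H.
  suff -> : expR c * l / A * expR (G1 y) + expR c * (1 - l) / B * expR (G2 y)
    = expR c * (l * (expR (G1 y) / A) + (1 - l) * (expR (G2 y) / B)).
    by apply: ler_wpM2l => //; exact: ltW (expR_gt0 c).
  by ring.
rewrite RintegralD //; last 2 first.
- exact: cont_int cf1.
- exact: cont_int cf2.
rewrite RintegralZl //; last exact: cont_int (contE c1).
rewrite RintegralZl //; last exact: cont_int (contE c2).
rewrite -/A -/B divfK ?(lt0r_neq0 A0) // divfK ?(lt0r_neq0 B0) //.
by rewrite -mulrDr subrKC mulr1.
Qed.

Lemma intZ (f : borel_type T -> R) k : mu.-integrable setT (EFin \o f) ->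
  mu.-integrable setT (EFin \o (fun x => k * f x)).
Proof.
move=> fi; have h := @integrableZl _ _ _ mu setT measurableT k _ fi.
by apply: (eq_integrable measurableT _ _ _ h) => x _; rewrite /= EFinM.
Qed.

Lemma intD (f h : borel_type T -> R) : mu.-integrable setT (EFin \o f) ->
  mu.-integrable setT (EFin \o h) ->
  mu.-integrable setT (EFin \o (fun x => f x + h x)).
Proof.
move=> fi hi; have hh := @integrableD _ _ _ mu setT measurableT _ _ fi hi.
by apply: (eq_integrable measurableT _ _ _ hh) => x _; rewrite /= EFinD.
Qed.

Lemma ent_int (f : borel_type T -> R) : measurable_fun setT f ->
  (forall x, -1 <= f x) -> (\int[mu]_x (f x)%:E < +oo)%E ->
  mu.-integrable setT (EFin \o f).
Proof.
move=> mf f1 fi; set F := EFin \o f.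
have mF : measurable_fun setT F by exact/measurable_EFinP.
have fi' : (\int[mu]_x F x < +oo)%E := fi.
apply/integrableP; split => //.
rewrite (_ : (fun x : borel_type T => `|F x|%E) = (F^\+ \+ F^\-)%E); last by rewrite -fune_abse.
rewrite ge0_integralD //; last 2 first.
- exact: measurable_funepos.
- exact: measurable_funeneg.
have nle : (\int[mu]_x F^\- x <= \int[mu]_x (cst 1%E) x)%E.
  apply: ge0_le_integral => //; first exact: measurable_funeneg.
  move=> x _; rewrite funenegE ge_max lee01 andbT /F /= lee_fin.
  by have := f1 x; lra.
have nlt : (\int[mu]_x F^\- x < +oo)%E.
  apply: le_lt_trans nle _.
  by rewrite (integral_cst mu measurableT) mul1e.
have nfin : (\int[mu]_x F^\- x)%E \is a fin_num.
  by rewrite ge0_fin_numE // integral_ge0.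
apply: lte_add_pinfty => //.
rewrite -(subeK (\int[mu]_x F^\+ x)%E nfin) -integralE.
exact: lte_add_pinfty.
Qed.

Lemma phi_meas (p : borel_type T -> R) : measurable_fun setT p ->
  measurable_fun setT (fun x => phi (p x)).
Proof.
move=> mp; apply: measurable_funM => //.
exact: measurableT_comp (@measurable_ln R) mp.
Qed.

Lemma intB (f h : borel_type T -> R) : mu.-integrable setT (EFin \o f) ->
  mu.-integrable setT (EFin \o h) ->
  mu.-integrable setT (EFin \o (fun x => f x - h x)).
Proof.
move=> fi hi; have hh := @integrableB _ _ _ mu setT measurableT _ _ fi hi.
by apply: (eq_integrable measurableT _ _ _ hh) => x _; rewrite /= EFinB.
Qed.

Lemma g_lin (p1 p2 : borel_type T -> R) l y : is_density mu p1 -> is_density mu p2 ->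
  Rintegral mu setT (fun x => K x y * (l * p1 x + (1 - l) * p2 x)) =
  l * Rintegral mu setT (fun x => K x y * p1 x) +
  (1 - l) * Rintegral mu setT (fun x => K x y * p2 x).
Proof.
move=> d1 d2.
have i1 := hp_int (@Kx_cont y) d1; have i2 := hp_int (@Kx_cont y) d2.
rewrite -RintegralZl // -RintegralZl // -RintegralD //; last 2 first.
- exact: intZ.
- exact: intZ.
by apply: eq_Rintegral => x _; ring.
Qed.

Lemma lnZ_conv (p1 p2 : borel_type T -> R) l beta :
  is_density mu p1 -> is_density mu p2 -> 0 < l < 1 ->
  ln (partition_fun mu K beta (fun x => l * p1 x + (1 - l) * p2 x)) <=
  l * ln (partition_fun mu K beta p1) + (1 - l) * ln (partition_fun mu K beta p2).
Proof.
move=> d1 d2 l01.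
have c1 : continuous (fun y => beta * Rintegral mu setT (fun x => K x y * p1 x)).
  by apply: contM; [exact: contC| exact: g_cont].
have c2 : continuous (fun y => beta * Rintegral mu setT (fun x => K x y * p2 x)).
  by apply: contM; [exact: contC| exact: g_cont].
have := Z_holder d1 c1 c2 l01.
rewrite /partition_fun.
suff -> : Rintegral mu setT (fun y => expR (beta *
     Rintegral mu setT (fun x => K x y * (l * p1 x + (1 - l) * p2 x)))) =
   Rintegral mu setT (fun y => expR (l * (beta * Rintegral mu setT (fun x => K x y * p1 x))
      + (1 - l) * (beta * Rintegral mu setT (fun x => K x y * p2 x)))) by [].
apply: eq_Rintegral => y _; rewrite g_lin //; congr expR; ring.
Qed.

Lemma ent_strict (p1 p2 : borel_type T -> R) l :
  is_density mu p1 -> is_density mu p2 -> ~ {ae mu, forall x, p1 x = p2 x} ->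
  (entropy mu p1 < +oo)%E -> (entropy mu p2 < +oo)%E -> 0 < l < 1 ->
  exists s1 s2 sl, [/\ entropy mu p1 = s1%:E, entropy mu p2 = s2%:E,
    entropy mu (fun x => l * p1 x + (1 - l) * p2 x) = sl%:E &
    sl < l * s1 + (1 - l) * s2].
Proof.
move=> [mp1 [p10 _]] [mp2 [p20 _]] nae S1 S2 l01.
have /andP[l0 l1] := l01.
set pl := fun x => l * p1 x + (1 - l) * p2 x.
have mpl : measurable_fun setT pl.
  by apply: measurable_funD; apply: measurable_funM.
have pl0 x : 0 <= pl x.
  by have := p10 x; have := p20 x; rewrite /pl; nra.
set f1 := fun x => phi (p1 x); set f2 := fun x => phi (p2 x).
set fl := fun x => phi (pl x).
have i1 : mu.-integrable setT (EFin \o f1).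
  exact: ent_int (phi_meas mp1) (fun x => phi_ge (p10 x)) S1.
have i2 : mu.-integrable setT (EFin \o f2).
  exact: ent_int (phi_meas mp2) (fun x => phi_ge (p20 x)) S2.
have ig : mu.-integrable setT (EFin \o (fun x =>
    l * `|f1 x| + (1 - l) * `|f2 x| + 1)).
  apply: intD; last by apply: cont_int; exact: contC.
  by apply: intD; apply: intZ; exact: integrable_norm.
have hle x : fl x <= l * f1 x + (1 - l) * f2 x by exact: phi_conv_le.
have il : mu.-integrable setT (EFin \o fl).
  apply: (@le_integrable _ _ _ mu setT measurableT _ _ _ _ ig).
  - by apply/measurable_EFinP; apply: phi_meas.
  move=> x _; rewrite /= lee_fin.
  have h1 := hle x; have h2 : -1 <= fl x := phi_ge (pl0 x).
  have n1 : l * f1 x <= l * `|f1 x| by rewrite ler_pM2l // ler_norm.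
  have n2 : (1 - l) * f2 x <= (1 - l) * `|f2 x|.
    by rewrite ler_pM2l ?subr_gt0 // ler_norm.
  have n3 : 0 <= l * `|f1 x| by apply: mulr_ge0 => //; exact: ltW.
  have n4 : 0 <= (1 - l) * `|f2 x| by apply: mulr_ge0 => //; rewrite subr_ge0 ltW.
  rewrite [X in _ <= X]ger0_norm; last by lra.
  by rewrite ler_norml; apply/andP; split; lra.
have E (f : borel_type T -> R) : mu.-integrable setT (EFin \o f) ->
    (\int[mu]_x (f x)%:E)%E = (Rintegral mu setT f)%:E.
  by move=> fi; rewrite /Rintegral fineK //; exact: integrable_fin_num fi.
exists (Rintegral mu setT f1), (Rintegral mu setT f2), (Rintegral mu setT fl).
split; [exact: E i1 | exact: E i2 | exact: E il | ].
set D := fun x => l * f1 x + (1 - l) * f2 x - fl x.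
have iD : mu.-integrable setT (EFin \o D).
  by apply: intB => //; apply: intD; apply: intZ.
have RD : Rintegral mu setT D =
    l * Rintegral mu setT f1 + (1 - l) * Rintegral mu setT f2 - Rintegral mu setT fl.
  rewrite /D RintegralB //; last by apply: intD; apply: intZ.
  by rewrite RintegralD ?RintegralZl //; apply: intZ.
have D0 x : 0 <= D x by rewrite /D subr_ge0.
suff : 0 < Rintegral mu setT D by rewrite RD subr_gt0.
have : 0 <= Rintegral mu setT D by apply: Rintegral_ge0 => x _; exact: D0.
rewrite le_eqVlt => /orP[/eqP h0'|//]; have h0 := esym h0'.
exfalso; apply: nae.
have h1 : (\int[mu]_x `|(EFin \o D) x| = 0)%E.
  rewrite (eq_integral (EFin \o D)); last by move=> x _; rewrite /= ger0_norm.
  by rewrite E // h0.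
have := (ae_eq_integral_abs mu measurableT (measurable_int mu iD)).1 h1.
apply: filterS => x /(_ I) /= [Dx].
apply/eqP; apply/negPn/negP => ne.
have := phi_conv_lt l01 (p10 x) (p20 x) ne.
by move: Dx; rewrite /D /fl /f1 /f2 /pl; lra.
Qed.
End M.

Unset Implicit Arguments.

Theorem proposition1 (R : realType) (T : pseudoPMetricType R)
  (mu : {measure set (borel_type T) -> \bar R})
  (K : T -> T -> R) (beta : R) (p1 p2 : borel_type T -> R) (lambda : R) :
  compact [set: T] -> hausdorff_space T ->
  (mu setT < +oo)%E ->
  continuous (fun xy : T * T => K xy.1 xy.2) ->
  0 < beta ->
  is_density mu p1 -> is_density mu p2 ->
  ~ {ae mu, forall x, p1 x = p2 x} ->
  (entropy mu p1 < +oo)%E -> (entropy mu p2 < +oo)%E ->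
  0 < lambda < 1 ->
  (free_energy mu K beta (fun x => (lambda * p1 x + (1 - lambda) * p2 x)%R)
   < lambda%:E * free_energy mu K beta p1
     + (1 - lambda)%:E * free_energy mu K beta p2)%E.
Proof.
move=> cT _ fmu cK b0 d1 d2 nae S1 S2 l01.
have [s1 [s2 [sl [E1 E2 El hS]]]] := ent_strict cT fmu d1 d2 nae S1 S2 l01.
have hZ := lnZ_conv cT fmu cK beta d1 d2 l01.
have key : forall a b c : R, a <= lambda * b + (1 - lambda) * c ->
    beta^-1 * a + beta^-1 * sl <
    lambda * (beta^-1 * b + beta^-1 * s1) + (1 - lambda) * (beta^-1 * c + beta^-1 * s2).
  move=> a b c h.
  have bi0 : 0 < beta^-1 by rewrite invr_gt0.
  have H1 := ler_wpM2l (ltW bi0) h.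
  have H2 : beta^-1 * sl < beta^-1 * (lambda * s1 + (1 - lambda) * s2) by rewrite ltr_pM2l.
  move: H1 H2; generalize (beta^-1) => bi H1 H2.
  have -> : lambda * (bi * b + bi * s1) + (1 - lambda) * (bi * c + bi * s2) =
    bi * (lambda * b + (1 - lambda) * c) + bi * (lambda * s1 + (1 - lambda) * s2).
    by ring.
  exact: ler_ltD H1 H2.
rewrite /free_energy El E1 E2 -?EFinM -?EFinD -?EFinM -?EFinD lte_fin.
exact: key hZ.
Qed.
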